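(* Let $X$ be a topological space and $\mathcal A,\mathcal B\subseteq\wp(X)$. Then the games $G_1(\Omega_{C_{\mathcal A}(X),\mathbf 0},\Omega_{C_{\mathcal B}(X),\mathbf 0})$ and $G_1(\mathscr N_{C_{\mathcal A}(X)}(\mathbf 0),\neg\Omega_{C_{\mathcal B}(X),\mathbf 0})$ are dual.
   Context: $C_{\mathcal A}(X)$ is the set of continuous $f:X\to\mathbb R$ with the topology generated by the sets $[f;A,\varepsilon]=\{g:\sup_{x\in A}|f(x)-g(x)|<\varepsilon\}$, $A\in\mathcal A$, $\varepsilon>0$; similarly $C_{\mathcal B}(X)$ (same underlying set). $\mathbf 0$ is the zero function. For a space $Y$ and $y\in Y$, $\Omega_{Y,y}=\{S\subseteq Y:y\in\mathrm{cl}_Y(S)\}$ and $\mathscr N_Y(y)$ is the set of open neighbourhoods of $y$. In $G_1(\mathcal E,\mathcal C)$, at each inning $n\in\omega$ One plays $E_n\in\mathcal E$ and Two picks $x_n\in E_n$; Two wins iff $\{x_n:n\in\omega\}\in\mathcal C$; $\neg\mathcal C$ is the complement of $\mathcal C$. A strategy for One maps finite sequences of Two's moves to moves; predetermined if it depends only on the inning number. A strategy for Two maps finite sequences of One's moves to an element of the last one; Markov if it depends only on One's last move and the inning number. $G,H$ are dual if: One has a winning strategy in $G$ iff Two has one in $H$; One has one in $H$ iff Two has one in $G$; One has a winning predetermined strategy in $G$ iff Two has a winning Markov strategy in $H$; One has a winning predetermined strategy in $H$ iff Two has a winning Markov strategy in $G$. *)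

(* Defs.v *)
From mathcomp Require Import all_boot all_order all_algebra.
From mathcomp Require Import all_classical all_reals all_analysis.
From mathcomp Require Import Rstruct Rstruct_topology.
From Stdlib Require Import List Reals.
Set Implicit Arguments. Unset Strict Implicit. Unset Printing Implicit Defensive.
Import Order.TTheory GRing.Theory Num.Theory.
Local Open Scope classical_set_scope.
Local Open Scope ring_scope.

(* Open sets of the topology on T generated by the family [sb] (as a subbase):
   unions of finite intersections of members of [sb]
   (the empty intersection being the whole space). *)
Definition gen_open (T : Type) (sb : set (set T)) (U : set T) : Prop :=
  forall x, U x ->
    exists s : list (set T),
      (forall V, List.In V s -> sb V /\ V x) /\
      (forall y, (forall V, List.In V s -> V y) -> U y).

Definition gen_closure (T : Type) (sb : set (set T)) (S : set T) (y : T) : Prop :=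
  forall U, gen_open sb U -> U y -> exists z, U z /\ S z.

Definition OmegaAt (T : Type) (sb : set (set T)) (y : T) : set (set T) :=
  [set S | gen_closure sb S y].

Definition OpenNbhds (T : Type) (sb : set (set T)) (y : T) : set (set T) :=
  [set U | gen_open sb U /\ U y].

Definition CX (X : topologicalType) : Type :=
  {f : X -> R | continuous f}.

Definition CXfun (X : topologicalType) (f : CX X) : X -> R := proj1_sig f.

(* [f; A, eps] = { g : sup_{x in A} |f x - g x| < eps }, the sup taken in the
   extended reals (sup of the empty set is -oo). *)
Definition basic_nbhd (X : topologicalType) (f : CX X) (A : set X) (eps : R)
  : set (CX X) :=
  [set g | (ereal_sup [set (`|CXfun f x - CXfun g x|)%:E | x in A]
             < eps%:E)%E].

Definition CA_subbase (X : topologicalType) (calA : set (set X)) : set (set (CX X)) :=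
  [set V | exists (f : CX X) (A : set X) (eps : R),
             calA A /\ 0 < eps /\ V = basic_nbhd f A eps].

Definition zeroCX (X : topologicalType) : CX X :=
  exist (fun f : X -> R => continuous f) (fun _ : X => (0 : R)) (@cst_continuous X R (0 : R)).

Section Games.
Variable P : Type.

Definition OneStrategy (E : set (set P)) (sigma : list P -> set P) : Prop :=
  forall h, E (sigma h).

Definition plays_against (sigma : list P -> set P) (x : nat -> P) : Prop :=
  forall n, sigma (map x (iota 0 n)) (x n).

Definition One_wins_with (E C : set (set P)) (sigma : list P -> set P) : Prop :=
  OneStrategy E sigma /\
  forall x : nat -> P, plays_against sigma x -> ~ C (range x).

Definition One_has_winning_strategy (E C : set (set P)) : Prop :=
  exists sigma, One_wins_with E C sigma.

Definition One_wins_with_predetermined (E C : set (set P)) (sigma : nat -> set P)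
  : Prop :=
  (forall n, E (sigma n)) /\
  forall x : nat -> P, (forall n, sigma n (x n)) -> ~ C (range x).

Definition One_has_winning_predetermined_strategy (E C : set (set P)) : Prop :=
  exists sigma, One_wins_with_predetermined E C sigma.

(* Strategy for Two: given the earlier moves of One (h) and One's last move F,
   picks an element of F. *)
Definition TwoStrategy (E : set (set P)) (tau : list (set P) -> set P -> P) : Prop :=
  forall h F, E F -> F (tau h F).

Definition Two_wins_with (E C : set (set P)) (tau : list (set P) -> set P -> P)
  : Prop :=
  TwoStrategy E tau /\
  forall F : nat -> set P, (forall n, E (F n)) ->
    C (range (fun n => tau (map F (iota 0 n)) (F n))).

Definition Two_has_winning_strategy (E C : set (set P)) : Prop :=
  exists tau, Two_wins_with E C tau.

Definition Two_wins_with_Markov (E C : set (set P)) (tau : set P -> nat -> P)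
  : Prop :=
  (forall F n, E F -> F (tau F n)) /\
  forall F : nat -> set P, (forall n, E (F n)) ->
    C (range (fun n => tau (F n) n)).

Definition Two_has_winning_Markov_strategy (E C : set (set P)) : Prop :=
  exists tau, Two_wins_with_Markov E C tau.

Definition dual_games (E1 C1 E2 C2 : set (set P)) : Prop :=
  (One_has_winning_strategy E1 C1 <-> Two_has_winning_strategy E2 C2) /\
  (One_has_winning_strategy E2 C2 <-> Two_has_winning_strategy E1 C1) /\
  (One_has_winning_predetermined_strategy E1 C1 <->
     Two_has_winning_Markov_strategy E2 C2) /\
  (One_has_winning_predetermined_strategy E2 C2 <->
     Two_has_winning_Markov_strategy E1 C1).

End Games.

(* Main.v *)
Require Import Defs.
From mathcomp Require Import all_boot all_order all_algebra.
From mathcomp Require Import all_classical all_reals all_analysis.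
From mathcomp Require Import Rstruct Rstruct_topology.
From Stdlib Require Import List Classical.
Local Open Scope classical_set_scope.

Definition ch {P : Type} (d : P) (S : set P) : P :=
  match pselect (exists z, S z) with
  | left h => proj1_sig (cid h)
  | right _ => d
  end.

Lemma chP {P : Type} (d : P) (S : set P) : (exists z, S z) -> S (ch d S).
Proof.
move=> h; rewrite /ch; case: (pselect _) => [h'|//].
exact: (proj2_sig (cid h')).
Qed.

Lemma cat_app {T : Type} (s1 s2 : list T) : seq.cat s1 s2 = app s1 s2.
Proof. by elim: s1 => //= a s1 ->. Qed.

Lemma iotaS0 n : seq.iota 0 n.+1 = app (seq.iota 0 n) (cons n nil).
Proof. by rewrite -addn1 seq.iotaD cat_app add0n. Qed.

Fixpoint go1 {P : Type} (d : P) (sigma : list P -> set P) (acc : list P)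
  (h : list (set P)) : list P :=
  match h with
  | nil => acc
  | U :: h' => go1 d sigma (app acc (cons (ch d (U `&` sigma acc)) nil)) h'
  end.

Lemma go1_snoc {P : Type} (d : P) sigma (h : list (set P)) : forall acc U,
  go1 d sigma acc (app h (cons U nil)) =
  app (go1 d sigma acc h) (cons (ch d (U `&` sigma (go1 d sigma acc h))) nil).
Proof. elim: h => [//|V h IH] acc U /=; exact: IH. Qed.

Lemma go1_play {P : Type} (d : P) sigma (F : nat -> set P) n :
  go1 d sigma nil (ListDef.map F (seq.iota 0 n)) =
  ListDef.map (fun k => ch d (F k `&` sigma (go1 d sigma nil (ListDef.map F (seq.iota 0 k)))))
    (seq.iota 0 n).
Proof.
elim: n => [//|n IH].
by rewrite iotaS0 !List.map_app /= go1_snoc IH.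
Qed.

Fixpoint go2 {P : Type} (tau : list (set P) -> set P -> P) (E : set (set P))
  (acc : list (set P)) (h : list P) : list (set P) :=
  match h with
  | nil => acc
  | z :: h' => go2 tau E (app acc (cons (ch setT (fun U => E U /\ tau acc U = z)) nil)) h'
  end.

Lemma go2_snoc {P : Type} tau E (h : list P) : forall acc z,
  go2 tau E acc (app h (cons z nil)) =
  app (go2 tau E acc h)
    (cons (ch setT (fun U => E U /\ tau (go2 tau E acc h) U = z)) nil).
Proof. elim: h => [//|V h IH] acc U /=; exact: IH. Qed.

Lemma go2_play {P : Type} tau E (x : nat -> P) n :
  go2 tau E nil (ListDef.map x (seq.iota 0 n)) =
  ListDef.map (fun k => ch setT (fun U => E U /\
        tau (go2 tau E nil (ListDef.map x (seq.iota 0 k))) U = x k))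
    (seq.iota 0 n).
Proof.
elim: n => [//|n IH].
by rewrite iotaS0 !List.map_app /= go2_snoc IH.
Qed.

Lemma openT {P : Type} (sb : set (set P)) : gen_open sb setT.
Proof. by move=> x _; exists nil; split. Qed.

Lemma NT {P : Type} (sb : set (set P)) y : OpenNbhds sb y setT.
Proof. split; [exact: openT | done]. Qed.

Lemma OmT {P : Type} (sb : set (set P)) y : OmegaAt sb y setT.
Proof. by move=> U _ Uy; exists y. Qed.

Lemma meet {P : Type} (sb : set (set P)) y S U :
  OmegaAt sb y S -> OpenNbhds sb y U -> exists z, U z /\ S z.
Proof. by move=> hS [hU Uy]; apply: hS. Qed.

Arguments meet {P sb y S U}.
Lemma Om_img {P : Type} (sb : set (set P)) y (f : set P -> P) :
  (forall U, OpenNbhds sb y U -> U (f U)) ->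
  OmegaAt sb y [set f U | U in OpenNbhds sb y].
Proof.
move=> hf W Wo Wy; exists (f W); split; first by apply: hf.
by exists W.
Qed.

Arguments Om_img {P sb y f}.
Lemma good_nbhd {P : Type} (sb : set (set P)) y (f : set P -> P) :
  (forall S, OmegaAt sb y S -> S (f S)) ->
  exists U, OpenNbhds sb y U /\
    forall z, U z -> exists S, OmegaAt sb y S /\ f S = z.
Proof.
move=> hf; apply: NNPP => H.
pose g U := ch y (fun z => U z /\ forall S, OmegaAt sb y S -> f S <> z).
have hg : forall U, OpenNbhds sb y U ->
    U (g U) /\ forall S, OmegaAt sb y S -> f S <> g U.
  move=> U hU; apply: (@chP _ y (fun z => U z /\ forall S, OmegaAt sb y S -> f S <> z)).
  apply: NNPP => H2; apply: H; exists U; split => // z Uz.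
  apply: NNPP => H3; apply: H2; exists z; split => // S hS e.
  by apply: H3; exists S.
have hS := Om_img (fun U hU => (proj1 (hg U hU))).
have [U hU e] := hf _ hS.
exact: ((proj2 (hg U hU)) _ hS (esym e)).
Qed.
Arguments meet {P sb y S U}.
Arguments Om_img {P sb y f}.
Arguments good_nbhd {P sb y f}.

Lemma dual_generic {P : Type} (sb : set (set P)) (y : P) (C : set (set P)) :
  dual_games (OmegaAt sb y) C (OpenNbhds sb y) (~` C).
Proof.
split; [split|split; [split|split; split]].
-
  case=> sigma [hs hw].
  exists (fun h U => ch y (U `&` sigma (go1 y sigma nil h))); split.
    move=> h F hF; have [] // := chP y (F `&` sigma (go1 y sigma nil h)) (meet (hs _) hF).
  move=> F hF Hc; apply: (hw _ _ Hc) => n.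
  rewrite -go1_play.
  apply: (proj2 (chP y (F n `&` _) _)); exact: meet (hs _) (hF n).
- case=> tau [ht hw].
  exists (fun h => [set tau (go2 tau (OpenNbhds sb y) nil h) U | U in OpenNbhds sb y]).
  split.
    by move=> h; apply: Om_img => U hU; apply: ht.
  move=> x hx.
  pose PF n U := OpenNbhds sb y U /\
     tau (go2 tau (OpenNbhds sb y) nil (ListDef.map x (seq.iota 0 n))) U = x n.
  pose F n := ch setT (PF n).
  have hF n : PF n (F n).
    apply: chP.
    by case: (hx n) => U hU e; exists U.
  have := hw F (fun n => (proj1 (hF n))).
  have -> // : (fun n => tau (ListDef.map F (seq.iota 0 n)) (F n)) = x.
  apply: funext => n; rewrite -(go2_play tau (OpenNbhds sb y) x n).
  exact: (proj2 (hF n)).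
- case=> sigma [hs hw].
  exists (fun h S => ch y (S `&` sigma (go1 y sigma nil h))); split.
    move=> h F hF; have [] // := chP y (F `&` sigma (go1 y sigma nil h)).
    have [z [z1 z2]] := meet hF (hs (go1 y sigma nil h)); by exists z.
  move=> F hF; apply: NNPP => Hc; apply: (hw _ _ Hc) => n.
  rewrite -go1_play.
  have [] // := chP y (F n `&` sigma (go1 y sigma nil (ListDef.map F (seq.iota 0 n)))).
  have [z [z1 z2]] := meet (hF n) (hs (go1 y sigma nil (ListDef.map F (seq.iota 0 n)))); by exists z.
- case=> tau [ht hw].
  pose PG h U := OpenNbhds sb y U /\ forall z, U z ->
     exists S, OmegaAt sb y S /\ tau (go2 tau (OmegaAt sb y) nil h) S = z.
  pose G h := ch setT (PG h).
  have hG h : PG h (G h).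
    apply: chP.
    by apply: good_nbhd => S hS; apply: ht.
  exists G; split; first by move=> h; exact: (proj1 (hG h)).
  move=> x hx.
  pose PF n U := OmegaAt sb y U /\
     tau (go2 tau (OmegaAt sb y) nil (ListDef.map x (seq.iota 0 n))) U = x n.
  pose F n := ch setT (PF n).
  have hF n : PF n (F n).
    apply: chP.
    exact: (proj2 (hG _)) _ (hx n).
  have := hw F (fun n => (proj1 (hF n))).
  have -> : (fun n => tau (ListDef.map F (seq.iota 0 n)) (F n)) = x.
    apply: funext => n; rewrite -(go2_play tau (OmegaAt sb y) x n).
    exact: (proj2 (hF n)).
  by move=> hc hn; apply: hn.
- case=> sigma [hs hw].
  exists (fun U n => ch y (U `&` sigma n)); split.
    move=> F n hF; have [] // := chP y (F `&` sigma n) (meet (hs _) hF).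
  move=> F hF Hc; apply: (hw _ _ Hc) => n.
  apply: (proj2 (chP y (F n `&` _) _)); exact: meet (hs _) (hF n).
- case=> tau [ht hw].
  exists (fun n => [set tau U n | U in OpenNbhds sb y]); split.
    by move=> n; apply: Om_img => U hU; apply: ht.
  move=> x hx.
  pose PF n U := OpenNbhds sb y U /\ tau U n = x n.
  pose F n := ch setT (PF n).
  have hF n : PF n (F n).
    apply: chP.
    by case: (hx n) => U hU e; exists U.
  have := hw F (fun n => (proj1 (hF n))).
  have -> // : (fun n => tau (F n) n) = x.
  apply: funext => n; exact: (proj2 (hF n)).
- case=> sigma [hs hw].
  exists (fun S n => ch y (S `&` sigma n)); split.
    move=> F n hF; have [] // := chP y (F `&` sigma n).
    have [z [z1 z2]] := meet hF (hs n); by exists z.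
  move=> F hF; apply: NNPP => Hc; apply: (hw _ _ Hc) => n.
  have [] // := chP y (F n `&` sigma n).
  have [z [z1 z2]] := meet (hF n) (hs n); by exists z.
- case=> tau [ht hw].
  pose PG n U := OpenNbhds sb y U /\ forall z, U z ->
     exists S, OmegaAt sb y S /\ tau S n = z.
  pose G n := ch setT (PG n).
  have hG n : PG n (G n).
    apply: chP.
    by apply: (good_nbhd (f := fun S => tau S n)) => S hS; apply: ht.
  exists G; split; first by move=> n; exact: (proj1 (hG n)).
  move=> x hx.
  pose PF n U := OmegaAt sb y U /\ tau U n = x n.
  pose F n := ch setT (PF n).
  have hF n : PF n (F n).
    apply: chP.
    exact: (proj2 (hG _)) _ (hx n).
  have := hw F (fun n => (proj1 (hF n))).
  have -> : (fun n => tau (F n) n) = x.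
    apply: funext => n; exact: (proj2 (hF n)).
  by move=> hc hn; apply: hn.
Qed.

Theorem mainTheorem5 (X : topologicalType) (calA calB : set (set X)) :
  dual_games
    (OmegaAt (CA_subbase calA) (zeroCX X))
    (OmegaAt (CA_subbase calB) (zeroCX X))
    (OpenNbhds (CA_subbase calA) (zeroCX X))
    (~` OmegaAt (CA_subbase calB) (zeroCX X)).
Proof. exact: dual_generic. Qed.
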